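(* For every integer $s \geq 1$, $$\mathsf {Brac}_{2,s}=\mathsf {Brac}_{2}= \left\{ \big( (p, 1-p), (1-p,p) \big) \, : \, p\in[0,1]\right\}.$$
   Context: $\Delta_d=\{\alpha\in\mathbb R^d:\alpha_i\ge0,\ \sum_i\alpha_i=1\}$. $\mathsf{Brac}_d=\{(\alpha,\beta)\in\Delta_d^2:\ \forall i,\ \sqrt{\alpha_i\beta_i}\le\sum_{j\ne i}\sqrt{\alpha_j\beta_j}\}$. For $s\ge1$, $\mathsf{Brac}_{d,s}$ is the set of $(\alpha,\beta)\in\Delta_d^2$ for which there exist $A_1,\dots,A_d,B_1,\dots,B_d\in M_s(\mathbb C)$ with $\sum_i A_iA_i^*=\sum_iB_iB_i^*=I_s$, $\sum_iA_iB_i^*=0$, and $\tfrac1s\|A_i\|_F^2=\alpha_i$, $\tfrac1s\|B_i\|_F^2=\beta_i$ for all $i$, where $\|X\|_F=\operatorname{Tr}(XX^* )^{1/2}$. *)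

(* Defs.v *)
From HB Require Import structures.
From mathcomp Require Import all_boot all_order all_algebra.
From mathcomp Require Import complex.
Set Implicit Arguments. Unset Strict Implicit. Unset Printing Implicit Defensive.
Import Order.TTheory GRing.Theory Num.Theory.
Local Open Scope ring_scope.
Local Open Scope complex_scope.

Definition in_simplex (R : rcfType) (d : nat) (a : {ffun 'I_d -> R}) : Prop :=
  (forall i, 0 <= a i) /\ \sum_(i < d) a i = 1.

Definition Brac (R : rcfType) (d : nat) (a b : {ffun 'I_d -> R}) : Prop :=
  [/\ in_simplex a, in_simplex b &
      forall i : 'I_d, Num.sqrt (a i * b i) <= \sum_(j < d | j != i) Num.sqrt (a j * b j)].

Definition adjmx (R : rcfType) (m n : nat) (X : 'M[R[i]]_(m, n)) : 'M[R[i]]_(n, m) :=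
  (map_mx (@conjc R) X)^T.

(* squared Frobenius norm ||X||_F^2 = Tr(X X^* ) (a complex number, real nonnegative) *)
Definition frob2 (R : rcfType) (s : nat) (X : 'M[R[i]]_s) : R[i] := \tr (X *m adjmx X).

Definition Brac_s (R : rcfType) (d s : nat) (a b : {ffun 'I_d -> R}) : Prop :=
  [/\ in_simplex a, in_simplex b &
      exists (A B : 'I_d -> 'M[R[i]]_s),
        [/\ \sum_(i < d) A i *m adjmx (A i) = 1%:M,
            \sum_(i < d) B i *m adjmx (B i) = 1%:M,
            \sum_(i < d) A i *m adjmx (B i) = 0,
            forall i, frob2 (A i) / s%:R = (a i)%:C &
            forall i, frob2 (B i) / s%:R = (b i)%:C]].

Definition pt2 (R : rcfType) (p q : R) : {ffun 'I_2 -> R} :=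
  [ffun i : 'I_2 => if i == ord0 then p else q].

(* Main.v *)
Require Import Defs.
From HB Require Import structures.
From mathcomp Require Import all_boot all_order all_algebra.
From mathcomp Require Import complex.
From mathcomp Require Import ring lra.
Import Order.TTheory GRing.Theory Num.Theory.
Local Open Scope ring_scope.

Section Aux.
Variable R : rcfType.
Local Open Scope complex_scope.

Lemma adjmxD m n (X Y : 'M[R[i]]_(m, n)) : adjmx (X + Y) = adjmx X + adjmx Y.
Proof. by rewrite /adjmx map_mxD linearD. Qed.

Lemma adjmxM m n p (X : 'M[R[i]]_(m, n)) (Y : 'M[R[i]]_(n, p)) :
  adjmx (X *m Y) = adjmx Y *m adjmx X.
Proof. by rewrite /adjmx map_mxM trmx_mul. Qed.

Lemma adjmx0 m n : adjmx (0 : 'M[R[i]]_(m, n)) = 0.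
Proof. by rewrite /adjmx map_mx0 trmx0. Qed.

Lemma adjmxK m n (X : 'M[R[i]]_(m, n)) : adjmx (adjmx X) = X.
Proof. by apply/matrixP => i j; rewrite !mxE conjcK. Qed.

Lemma adj_sc n (x : R) : adjmx (x%:C%:M : 'M[R[i]]_n) = x%:C%:M.
Proof. rewrite /adjmx map_scalar_mx. have E : complex_conjc__canonical__GRing_RMorphism R x%:C = x%:C by exact: (conjc_real x). by rewrite E; exact: tr_scalar_mx. Qed.

Lemma key s (A0 A1 B0 B1 : 'M[R[i]]_s) :
  A0 *m adjmx A0 + A1 *m adjmx A1 = 1%:M ->
  B0 *m adjmx B0 + B1 *m adjmx B1 = 1%:M ->
  A0 *m adjmx B0 + A1 *m adjmx B1 = 0 ->
  frob2 A0 + frob2 B0 = s%:R.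
Proof.
move=> H1 H2 H3.
have H4 : B0 *m adjmx A0 + B1 *m adjmx A1 = 0.
  by rewrite -[B0]adjmxK -[B1]adjmxK -!adjmxM -adjmxD H3 adjmx0.
pose W := block_mx A0 A1 B0 B1.
have adjW : adjmx W = block_mx (adjmx A0) (adjmx B0) (adjmx A1) (adjmx B1).
  by rewrite /adjmx map_block_mx tr_block_mx.
have HW : W *m adjmx W = 1%:M.
  by rewrite adjW mulmx_block H1 H2 H3 H4 -scalar_mx_block.
have := mulmx1C HW; rewrite adjW mulmx_block => HW'.
have U : ulsubmx (1%:M : 'M[R[i]]_(s + s)) = 1%:M.
  by apply/matrixP => i j; rewrite !mxE eq_lshift.
have := congr1 (@ulsubmx _ s s s s) HW'.
rewrite block_mxKul U => E.
have := congr1 mxtrace E.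
by rewrite mxtraceD (mxtrace_mulC (adjmx A0)) (mxtrace_mulC (adjmx B0)) mxtrace1.
Qed.

Lemma rcD (x y : R) : (x + y)%:C = x%:C + y%:C :> R[i].
Proof. by apply/eqP; rewrite eq_complex /= addr0 !eqxx. Qed.

Lemma rcM (x y : R) : (x * y)%:C = x%:C * y%:C :> R[i].
Proof. by apply/eqP; rewrite eq_complex /= !mulr0 !mul0r subr0 addr0 !eqxx. Qed.

Lemma natdiv (c : R[i]) (s : nat) : (s%:R : R[i]) != 0 -> c *+ s / s%:R = c.
Proof. by move=> h; rewrite -[c *+ s]mulr_natr mulfK. Qed.

Lemma ord2_cases (i : 'I_2) : i = ord0 \/ i = lift ord0 ord0.
Proof.
case: i => [[|[|k]] Hk].
- by left; apply: val_inj.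
- by right; apply: val_inj.
- by [].
Qed.

Lemma ffun2 (f : {ffun 'I_2 -> R}) : f = pt2 (f ord0) (f (lift ord0 ord0)).
Proof.
apply/ffunP => i; rewrite ffunE.
by case: (ord2_cases i) => ->.
Qed.

Lemma sum2 (F : 'I_2 -> R) : \sum_(i < 2) F i = F ord0 + F (lift ord0 ord0).
Proof. by rewrite !big_ord_recl big_ord0 addr0. Qed.

Lemma part2 (a b : {ffun 'I_2 -> R}) :
  Brac a b <-> exists p : R, 0 <= p <= 1 /\ a = pt2 p (1 - p) /\ b = pt2 (1 - p) p.
Proof.
split.
- case=> [[a0 asum] [b0 bsum] H].
  have h0 := H ord0; have h1 := H (lift ord0 ord0).
  rewrite big_mkcond !big_ord_recl big_ord0 /= in h0.
  rewrite big_mkcond !big_ord_recl big_ord0 /= in h1.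
  rewrite !sum2 in asum bsum.
  have x0 := a0 ord0; have x1 := a0 (lift ord0 ord0).
  have y0 := b0 ord0; have y1 := b0 (lift ord0 ord0).
  have Eq : Num.sqrt (a ord0 * b ord0) = Num.sqrt (a (lift ord0 ord0) * b (lift ord0 ord0)).
    apply/le_anti/andP; split; move: h0 h1; rewrite ?addr0 ?add0r //.
  have Eq2 : a ord0 * b ord0 = a (lift ord0 ord0) * b (lift ord0 ord0).
    by rewrite -(sqr_sqrtr (mulr_ge0 x0 y0)) Eq sqr_sqrtr // mulr_ge0.
  exists (a ord0); split; first by apply/andP; split; lra.
  split; rewrite [LHS]ffun2; congr pt2; nra.
- case=> p [/andP [p0 p1] [-> ->]].
  have hs : forall x y : R, 0 <= x -> 0 <= y -> x + y = 1 -> in_simplex (pt2 x y).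
    move=> x y hx hy hxy; split; last by rewrite sum2 !ffunE.
    by move=> i; rewrite ffunE; case: ifP.
  split; [apply: hs; lra | apply: hs; lra |].
  move=> i; rewrite big_mkcond !big_ord_recl big_ord0 /=.
  by case: (ord2_cases i) => -> /=; rewrite !ffunE /= ?addr0 ?add0r mulrC.
Qed.

End Aux.
Local Open Scope complex_scope.

Theorem proposition3p9 (R : rcfType) (s : nat) (hs : (1 <= s)%N) :
  (forall a b : {ffun 'I_2 -> R}, Brac_s s a b <-> Brac a b) /\
  (forall a b : {ffun 'I_2 -> R},
     Brac a b <-> exists p : R, 0 <= p <= 1 /\ a = pt2 p (1 - p) /\ b = pt2 (1 - p) p).
Proof.
split; last exact: part2.
have sn : (s%:R : R[i]) != 0 by rewrite pnatr_eq0 -lt0n.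
move=> a b; split.
- case=> [sa sb [A [B [HA HB HAB Fa Fb]]]].
  rewrite !big_ord_recl !big_ord0 !addr0 in HA HB HAB.
  have K := @key R _ _ _ _ _ HA HB HAB.
  have Ea : frob2 (A ord0) = (a ord0)%:C * s%:R by rewrite -(Fa ord0) divfK.
  have Eb : frob2 (B ord0) = (b ord0)%:C * s%:R by rewrite -(Fb ord0) divfK.
  have E1 : (a ord0 + b ord0)%:C = 1.
    by apply: (mulIf sn); rewrite rcD mulrDl mul1r -[in RHS]K Ea Eb.
  have hab : a ord0 + b ord0 = 1 by apply: complexI; rewrite E1.
  apply/part2; exists (a ord0).
  case: sa => a0 asum; case: sb => b0 bsum; rewrite !sum2 in asum bsum.
  have x0 := a0 ord0; have x1 := a0 (lift ord0 ord0).
  have y0 := b0 ord0; have y1 := b0 (lift ord0 ord0).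
  split; first by apply/andP; split; lra.
  split; rewrite [LHS]ffun2; congr pt2; lra.
- move=> H; have [p [/andP[p0 p1] [Ea Eb]]] := (@part2 R a b).1 H.
  case: H => sa sb _; split => //.
  set x := Num.sqrt p; set y := Num.sqrt (1 - p).
  have xx : x * x = p by rewrite -expr2 sqr_sqrtr.
  have yy : y * y = 1 - p by rewrite -expr2 sqr_sqrtr // subr_ge0.
  exists (fun i => ((if i == ord0 then x else y)%:C)%:M),
         (fun i => ((if i == ord0 then y else - x)%:C)%:M).
  rewrite !big_ord_recl !big_ord0 !addr0 /= !adj_sc -!scalar_mxM -!rmorphM.
  have h1 : x * x + y * y = 1 by rewrite xx yy addrC subrK.
  have h2 : y * y + - x * - x = 1 by rewrite mulrNN xx yy subrK.
  have h3 : x * y + y * - x = 0 by rewrite mulrN mulrC subrr.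
  split.
  - by rewrite -raddfD -raddfD h1.
  - by rewrite -raddfD -raddfD h2.
  - rewrite -raddfD -rcD h3; exact: (raddf0 (@scalar_mx _ s)).
  - move=> i; rewrite /frob2 adj_sc -scalar_mxM mxtrace_scalar natdiv // -rcM.
    by case: (ord2_cases i) => -> /=; rewrite Ea ffunE /= ?xx ?yy.
  - move=> i; rewrite /frob2 adj_sc -scalar_mxM mxtrace_scalar natdiv // -rcM.
    by case: (ord2_cases i) => -> /=; rewrite Eb ffunE /= ?mulrNN ?xx ?yy.
Qed.
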